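(* Let $n\ge 2$ and let $A_1,\ldots,A_{n+1}$ be pairwise skew $(n-1)$-spaces of $\mathrm{PG}(2n,q)$. The number of $n$-spaces of $\mathrm{PG}(2n,q)$ that intersect every $A_i$, $1\leq i\leq n+1$, is $\mathcal{O}(q^{n^2-1})$.
   Context: $\mathrm{PG}(2n,q)$ is the projective space of projective dimension $2n$ over the field of order $q$; an $i$-space is a subspace of projective dimension $i$; skew means disjoint. $\mathcal{O}(q^m)$ means bounded above by $Cq^m$ with $C$ depending only on $n$. *)

(* Defs.v *)
(* Projective geometry PG(N-1, F) over a finite field F is
   modelled by the row space F^N ('rV[F]_N); a projective k-space is a vector
   subspace of dimension k+1, represented canonically (via mxalgebra) by a
   square matrix U with <<U>>%MS = U and \rank U = k+1. *)
From HB Require Import structures.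
From mathcomp Require Import all_boot all_order all_algebra.
Set Implicit Arguments. Unset Strict Implicit. Unset Printing Implicit Defensive.
Import GRing.Theory.
Local Open Scope ring_scope.

Definition proj_spaces (F : finFieldType) (N k : nat) : {set 'M[F]_N} :=
  [set U : 'M[F]_N | (<<U>>%MS == U) && (\rank U == k.+1)%N].

Definition skew_spaces (F : fieldType) (N : nat) (U V : 'M[F]_N) : Prop :=
  \rank (U :&: V)%MS = 0%N.

Definition meets (F : fieldType) (N : nat) (U V : 'M[F]_N) : bool :=
  (0 < \rank (U :&: V)%MS)%N.

(* Main.v *)
Require Import Defs.
From HB Require Import structures.
From mathcomp Require Import all_boot all_order all_algebra.
From mathcomp Require Import zify.
Set Implicit Arguments. Unset Strict Implicit. Unset Printing Implicit Defensive.
Import GRing.Theory.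
Local Open Scope ring_scope.

Lemma card_bigcup_le (I T : finType) (P : pred I) (B : I -> {set T}) :
  (#|\bigcup_(i | P i) B i| <= \sum_(i | P i) #|B i|)%N.
Proof.
apply: (big_ind2 (fun (X : {set T}) (k : nat) => #|X| <= k)%N) => //.
- by rewrite cards0.
- move=> X1 k1 X2 k2 h1 h2; apply: leq_trans (leq_card_setU X1 X2).1 _.
  exact: leq_add.
Qed.

Section Pts.
Variable F : finFieldType.
Local Notation q := #|F|.

Lemma q_ge2 : (2 <= q)%N.
Proof.
have -> : 2%N = #|[set (0:F); 1]| by rewrite cards2 eq_sym oner_neq0.
exact: max_card.
Qed.

Lemma card_svecs m N (X : 'M[F]_(m, N)) :
  #|[set v : 'rV[F]_N | (v <= X)%MS]| = (q ^ \rank X)%N.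
Proof.
have -> : [set v : 'rV[F]_N | (v <= X)%MS] =
          (fun u : 'rV[F]_(\rank X) => u *m row_base X) @: [set: 'rV[F]_(\rank X)].
  apply/setP => v; rewrite inE; apply/idP/imsetP.
  - rewrite -(eq_row_base X) => /submxP[D ->]; by exists D.
  - by case=> D _ ->; rewrite -(eq_row_base X) submxMl.
rewrite card_imset; last exact: row_free_inj (row_base_free X).
by rewrite cardsT card_mx mul1n.
Qed.

Definition fnz N (v : 'rV[F]_N) := [pick i | v 0 i != 0].
Definition nrm N (v : 'rV[F]_N) : 'rV_N :=
  if fnz v is Some i then (v 0 i)^-1 *: v else v.
Definition pts m N (X : 'M[F]_(m, N)) :=
  [set v : 'rV[F]_N | (v <= X)%MS && (v != 0) && (nrm v == v)].

Lemma nrmZ N c (v : 'rV[F]_N) : c != 0 -> nrm (c *: v) = nrm v.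
Proof.
move=> c0; rewrite /nrm /fnz.
have -> : [pick i | (c *: v) 0 i != 0] = [pick i | v 0 i != 0].
  by apply: eq_pick => i /=; rewrite mxE mulf_eq0 negb_or c0.
case: pickP => [i vi|h]; first by rewrite mxE scalerA invfM mulrAC mulVf ?mul1r.
have -> : v = 0 by apply/rowP=> i; rewrite mxE; apply/eqP; move: (h i); rewrite /= => /negbFE.
by rewrite scaler0.
Qed.

Lemma nrm_eq0 N (v : 'rV[F]_N) : (nrm v == 0) = (v == 0).
Proof.
rewrite /nrm /fnz; case: pickP => // i vi.
by rewrite scaler_eq0 invr_eq0 (negbTE vi).
Qed.

Lemma nrm_id N (v : 'rV[F]_N) : nrm (nrm v) = nrm v.
Proof.
case E: (fnz v) => [i|]; last first.
  have e : nrm v = v by rewrite /nrm E.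
  by rewrite e; exact e.
have vi : v 0 i != 0 by move: E; rewrite /fnz; case: pickP => [j vj [<-]|] //.
have e : nrm v = (v 0 i)^-1 *: v by rewrite /nrm E.
by rewrite e nrmZ ?invr_eq0.
Qed.

Lemma nrm_sub m N (v : 'rV[F]_N) (X : 'M_(m, N)) : (v <= X)%MS -> (nrm v <= X)%MS.
Proof. by rewrite /nrm; case: fnz => // i; apply: scalemx_sub. Qed.

Lemma pts_nrm m N (X : 'M[F]_(m, N)) v : (v <= X)%MS -> v != 0 -> nrm v \in pts X.
Proof. by move=> vX v0; rewrite inE nrm_sub // nrm_eq0 v0 nrm_id eqxx. Qed.

Lemma card_pts m N (X : 'M[F]_(m, N)) : (#|pts X| * q.-1 <= q ^ \rank X)%N.
Proof.
rewrite -card_svecs -(cardsC1 (0:F)) mulnC -cardsX.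
rewrite -(@card_in_imset _ _ (fun p : F * 'rV[F]_N => p.1 *: p.2)).
  apply: subset_leq_card; apply/subsetP => x /imsetP[[c v] H ->].
  move: H; rewrite !inE /= => /andP[_ /andP[/andP[vX _] _]].
  by rewrite scalemx_sub.
move=> [c v] [c' v']; rewrite !inE /= => /andP[c0 /andP[/andP[_ v0] /eqP nv]].
move=> /andP[c0' /andP[/andP[_ v0'] /eqP nv']] E.
have ev : v = v' by rewrite -nv -nv' -(nrmZ v c0) E nrmZ.
subst v'; congr (_, _); apply/eqP; rewrite -subr_eq0.
by move/eqP: E; rewrite -subr_eq0 -scalerBl scaler_eq0 (negbTE v0) orbF.
Qed.

Lemma card_pts2 m N (X : 'M[F]_(m, N)) : (#|pts X| <= 2 * q ^ (\rank X).-1)%N.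
Proof.
have hq := q_ge2.
case r: (\rank X) => [|r'] /=.
  have -> : pts X = set0.
    apply/setP => v; rewrite !inE; apply/negP => /andP[/andP[vX v0] _].
    move/eqP: r; rewrite mxrank_eq0 => /eqP X0; move: vX; rewrite X0 => /submx0null v00.
    by rewrite v00 eqxx in v0.
  by rewrite cards0.
have := card_pts X; rewrite r expnS => h.
move: h hq; rewrite /=; move: #|pts X| (q ^ r')%N q => P Q k; nia.
Qed.

End Pts.

Section Ext.
Variable F : finFieldType.
Local Notation q := #|F|.
Variable n : nat.
Local Notation N := n.*2.+1.

Definition Tm (S : 'M[F]_N) : 'M[F]_N :=
  (pid_mx n.+1 : 'M_(N, \rank (S^C)%MS)) *m row_base (S^C)%MS.

Lemma Tm_rank S : (\rank S <= n)%N -> \rank (Tm S) = n.+1.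
Proof.
move=> hS; rewrite mxrankMfree ?row_base_free // rank_pid_mx //.
  by lia.
by rewrite mxrank_compl; lia.
Qed.

Lemma Tm_cap S : (S :&: Tm S)%MS = 0.
Proof.
apply/eqP; rewrite -submx0 -(capmx_compl S); apply: capmxS => //.
by rewrite /Tm -(eq_row_base (S^C)%MS) submxMl.
Qed.

Definition Ext (S : 'M[F]_N) :=
  [set U : 'M[F]_N | (<<U>>%MS == U) && (\rank U == n.+1) && (S <= U)%MS].

Lemma cap_nz (U T : 'M[F]_N) : \rank U = n.+1 -> \rank T = n.+1 ->
  (U :&: T)%MS != 0.
Proof.
move=> hU hT; rewrite -mxrank_eq0; have := mxrank_sum_cap U T.
have := rank_leq_col (U + T)%MS; rewrite hU hT; lia.
Qed.

Lemma card_Ext k : forall S : 'M[F]_N, (\rank S + k = n.+1)%N ->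
  (#|Ext S| <= (2 * q ^ n) ^ k)%N.
Proof.
elim: k => [|k IH] S hS.
  rewrite expn0; have : Ext S \subset [set <<S>>%MS].
    apply/subsetP => U; rewrite !inE => /andP[/andP[/eqP gU /eqP rU] SU].
    apply/eqP; rewrite -gU; apply/genmxP.
    have e : (S == U)%MS by rewrite -(mxrank_leqif_eq SU) rU -hS addn0.
    by case/andP: e => -> ->.
  by move/subset_leq_card; rewrite cards1.
have hSn : (\rank S <= n)%N by lia.
have hT := Tm_rank hSn.
have sub : Ext S \subset \bigcup_(t in pts (Tm S)) Ext (S + t)%MS.
  apply/subsetP => U; rewrite inE => /andP[/andP[gU /eqP rU] SU].
  pose t := nrm (nz_row (U :&: Tm S)%MS).
  have tU : (t <= U :&: Tm S)%MS by apply: nrm_sub; apply: nz_row_sub.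
  have t0 : t != 0 by rewrite nrm_eq0 nz_row_eq0 cap_nz.
  apply/bigcupP; exists t.
    by rewrite pts_nrm ?nz_row_eq0 ?cap_nz // (submx_trans (nz_row_sub _)) ?capmxSr.
  rewrite inE gU rU eqxx /= addsmx_sub SU.
  exact: (submx_trans tU (capmxSl _ _)).
apply: leq_trans (subset_leq_card sub) _.
apply: leq_trans (card_bigcup_le _ _) _.
apply: (@leq_trans (\sum_(t in pts (Tm S)) (2 * q ^ n) ^ k)%N).
  apply: leq_sum => t; rewrite inE => /andP[/andP[tT t0] _]; apply: IH.
  rewrite mxrank_disjoint_sum ?rank_rV ?t0 /=; first by lia.
  apply/eqP; rewrite -submx0 -(Tm_cap S); exact: capmxS.
rewrite sum_nat_const expnS leq_mul2r; apply/orP; right.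
by have := card_pts2 (Tm S); rewrite hT.
Qed.

End Ext.

Lemma card_fam (aT rT : finType) (P : aT -> {set rT}) :
  #|[set f : {ffun aT -> rT} | [forall x, f x \in P x]]| = (\prod_x #|P x|)%N.
Proof.
have := card_family (fun x : aT => mem (P x)).
rewrite foldrE big_map big_enum /= => <-.
apply: eq_card => f; rewrite inE; apply/forallP/familyP => h x; exact: h.
Qed.

Lemma subB_sub (F : fieldType) m1 m2 k (x y : 'M[F]_(m1, k)) (C : 'M[F]_(m2, k)) :
  (x <= C)%MS -> (y <= C)%MS -> (x - y <= C)%MS.
Proof. by move=> hx hy; apply: addmx_sub => //; rewrite -scaleN1r scalemx_sub. Qed.

Lemma rank_step (F : fieldType) m k (S : 'M[F]_(m, k)) (v : 'rV[F]_k) :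
  ~~ (v <= S)%MS -> \rank (S + v)%MS = (\rank S + 1)%N.
Proof.
move=> vS; have v0 : v != 0 by apply: contra vS => /eqP ->; rewrite sub0mx.
have := mxrank_sum_cap S v; rewrite rank_rV v0.
suff -> : \rank (S :&: v)%MS = 0%N by rewrite addn0.
apply/eqP; rewrite mxrank_eq0; apply/rowV0P => w wSv.
have wv := submx_trans wSv (capmxSr _ _); case/sub_rVP: wv => c wc.
have wS := submx_trans wSv (capmxSl _ _).
case: (eqVneq c 0) => [c0|c0]; first by rewrite wc c0 scale0r.
by move: wS; rewrite wc (eqmx_scale _ c0) (negbTE vS).
Qed.

Section Main.
Variables (F : finFieldType) (n : nat).
Local Notation q := #|F|.
Local Notation N := n.*2.+1.
Local Notation vT := {ffun 'I_n.+1 -> 'rV[F]_N}.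

Definition Sm (v : vT) (j : nat) : 'M[F]_(n.+1, N) :=
  \matrix_(i < n.+1) (if (i < j)%N then v i else 0).

Lemma row_Sm v j i : row i (Sm v j) = if (i < j)%N then v i else 0.
Proof. by rewrite rowK. Qed.

Lemma Sm_sub m (v : vT) j (X : 'M[F]_(m, N)) :
  (forall i : 'I_n.+1, (i < j)%N -> (v i <= X)%MS) -> (Sm v j <= X)%MS.
Proof.
by move=> h; apply/row_subP => i; rewrite row_Sm; case: ifP => [/h|] //; rewrite sub0mx.
Qed.

Lemma Sm_step v (k : 'I_n.+1) : (Sm v k.+1 :=: Sm v k + v k)%MS.
Proof.
apply/eqmxP; apply/andP; split.
  apply: Sm_sub => i; rewrite ltnS leq_eqVlt => /orP[/eqP/val_inj ->|ik].
    exact: addsmxSr.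
  apply: submx_trans (addsmxSl _ _); apply: (eq_row_sub i); by rewrite row_Sm ik.
rewrite addsmx_sub; apply/andP; split.
  by apply: Sm_sub => i ik; apply: (eq_row_sub i); rewrite row_Sm ltnS ltnW.
by apply: (eq_row_sub k); rewrite row_Sm ltnSn.
Qed.

Lemma Sm0 v : Sm v 0 = 0.
Proof. by apply/row_matrixP => i; rewrite row_Sm row0. Qed.

Lemma dich v : \rank (Sm v n.+1) = n.+1 \/
  exists j : 'I_n.+1, \rank (Sm v j) = j /\ (v j <= Sm v j)%MS.
Proof.
suff : forall k, (k <= n.+1)%N -> \rank (Sm v k) = k \/
  exists j : 'I_n.+1, \rank (Sm v j) = j /\ (v j <= Sm v j)%MS by apply.
elim => [|k IH] hk; first by left; rewrite Sm0 mxrank0.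
case: (IH (ltnW hk)) => [rk|]; last by right.
pose kk := Ordinal hk.
case vk: (v kk <= Sm v kk)%MS; first by right; exists kk.
left; have -> : k.+1 = kk.+1 by [].
by rewrite (Sm_step v kk) rank_step ?vk // rk addn1.
Qed.

End Main.

Section Dec.
Variables (F : finFieldType) (n : nat).
Local Notation q := #|F|.
Local Notation N := n.*2.+1.
Local Notation vT := {ffun 'I_n.+1 -> 'rV[F]_N}.
Variable A : 'I_n.+1 -> 'M[F]_N.
Hypothesis hA : forall i, \rank (A i) = n.
Hypothesis hsk : forall i j, i != j -> (A i :&: A j)%MS = 0.
Variable j : 'I_n.+1.

Definition Dj := [set v : vT | [forall i : 'I_n.+1, if (i < j)%N then v i \in pts (A i) else v i == 0]
   && (\rank (Sm v j) == j) && ((Sm v j :&: A j)%MS != 0)].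

Definition za (R : {set 'I_n.+1}) (a : 'I_n.+1) (c : vT) : 'rV[F]_N :=
  odflt 0 [pick z : 'rV[F]_N | (z <= A a)%MS && ((z + \sum_(i in R | i != a) c i)%R <= A j)%MS].

Definition dec (R : {set 'I_n.+1}) (a : 'I_n.+1) (c : vT) : vT :=
  [ffun i : 'I_n.+1 => if (i < j)%N then (if i == a then nrm (za R a c) else nrm (c i)) else 0].

Definition Cset (a b i : 'I_n.+1) : {set 'rV[F]_N} :=
  if i == b then pts (A i) else if (i < j)%N && (i != a) then [set x | (x <= A i)%MS]
  else [set 0].

Definition Cd a b := [set c : vT | [forall i : 'I_n.+1, c i \in Cset a b i]].

Definition good (p : {set 'I_n.+1} * 'I_n.+1 * 'I_n.+1) :=
  [&& p.1.2 \in p.1.1, p.2 \in p.1.1, p.1.2 != p.2, (p.1.2 < j)%N & (p.2 < j)%N].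

Lemma pts_sub m (X : 'M[F]_(m, N)) x : x \in pts X -> (x <= X)%MS /\ x != 0 /\ nrm x = x.
Proof. by rewrite inE => /andP[/andP[-> ->] /eqP ->]. Qed.

Lemma Dj_cover : Dj \subset \bigcup_(p | good p) (dec p.1.1 p.1.2 @: Cd p.1.2 p.2).
Proof.
apply/subsetP => v; rewrite inE => /andP[/andP[/forallP hv _] hcap].
have vi0 : forall i : 'I_n.+1, ~~ (i < j)%N -> v i = 0.
  by move=> i /negbTE ij; move: (hv i); rewrite ij => /eqP.
have vip : forall i : 'I_n.+1, (i < j)%N -> v i \in pts (A i).
  by move=> i ij; move: (hv i); rewrite ij.
have rowS : forall i, row i (Sm v j) = v i.
  by move=> i; rewrite row_Sm; case: ifP => // /negbT /vi0 ->.
case/rowV0Pn: hcap => w wS w0.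
have wA : (w <= A j)%MS := submx_trans wS (capmxSr _ _).
case/submxP: (submx_trans wS (capmxSl _ _)) => lam wE.
rewrite mulmx_sum_row in wE.
have wE' : w = \sum_i lam 0 i *: v i.
  by rewrite wE; apply: eq_bigr => i _; rewrite rowS.
pose R := [set i | lam 0 i *: v i != 0].
have wR : w = \sum_(i in R) lam 0 i *: v i.
  rewrite wE' (bigID (mem R)) /= [X in _ + X]big1 ?addr0 //.
  by move=> i; rewrite inE negbK => /eqP.
have Rlt : forall i, i \in R -> (i < j)%N.
  move=> i; rewrite inE; apply: contraR => /vi0 ->; by rewrite scaler0 eqxx.
have Rlam : forall i, i \in R -> lam 0 i != 0.
  by move=> i; rewrite inE; apply: contraNneq => ->; rewrite scale0r.
case: (pickP (mem R)) => [a aR | R0]; last first.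
  have : \sum_(i in R) lam 0 i *: v i = 0 by apply: big_pred0 => i; exact: R0 i.
  by rewrite -wR => e; rewrite e eqxx in w0.
have {}aR : a \in R by [].
case: (pickP [pred b | (b \in R) && (b != a)]) => [b /andP[bR ba] | Rb]; last first.
  exfalso.
  have e : \sum_(i in R) lam 0 i *: v i = lam 0 a *: v a.
    apply: big_pred1 => x /=; apply/idP/idP => [xR|/eqP ->//].
    by move: (Rb x) => /=; rewrite xR /= => /negbFE.
  have wa : (lam 0 a *: v a <= A a)%MS.
    by apply: scalemx_sub; case: (pts_sub (vip a (Rlt a aR))).
  have aj : a != j by apply: contraTneq (Rlt a aR) => ->; rewrite ltnn.
  move: w0; rewrite -submx0 -(hsk aj) sub_capmx.
  by rewrite wR e wa -e -wR wA.
pose k := (lam 0 b)^-1.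
have k0 : k != 0 by rewrite invr_eq0 Rlam.
pose c : vT := [ffun i => if i == a then 0 else if i \in R then (k * lam 0 i) *: v i else v i].
apply/bigcupP; exists (R, a, b); first by rewrite /good /= aR bR eq_sym ba !Rlt.
apply/imsetP; exists c.
  rewrite inE; apply/forallP => i; rewrite /Cset ffunE.
  case: (eqVneq i b) => [->|ib].
    rewrite (negbTE ba) bR /k mulVf ?Rlam // scale1r.
    exact: vip _ (Rlt _ bR).
  case: (eqVneq i a) => [->|ia]; first by rewrite andbF inE.
  rewrite andbT; case: (boolP (i < j)%N) => ij.
    rewrite inE; case: (pts_sub (vip i ij)) => viA _.
    by case: ifP => _ //; rewrite scalemx_sub.
  by rewrite vi0 // scaler0 if_same inE.
apply/ffunP => i; rewrite ffunE.
case: (boolP (i < j)%N) => ij; last by rewrite vi0.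
case: (pts_sub (vip i ij)) => viA [vi00 nvi].
case: (eqVneq i a) => [ia|ia]; last first.
  rewrite ffunE (negbTE ia); case: ifP => // iR.
  by rewrite nrmZ // mulf_neq0 // Rlam.
subst i.
pose zs := (k * lam 0 a) *: v a.
have Pzs : (zs <= A a)%MS && ((zs + \sum_(i in R | i != a) c i)%R <= A j)%MS.
  rewrite scalemx_sub //=.
  have -> : zs + \sum_(i in R | i != a) c i = k *: w.
    rewrite wR scaler_sumr [in RHS](bigD1 a) //=; congr (_ + _).
      by rewrite /zs scalerA.
    apply: eq_bigr => i /andP[iR ia]; rewrite ffunE (negbTE ia) iR scalerA //.
  by rewrite scalemx_sub.
have -> : za R a c = zs.
  rewrite /za; case: pickP => [z /andP[zA zj] | h]; last by move: (h zs); rewrite Pzs.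
  case/andP: Pzs => zsA zsj; apply/eqP; rewrite -subr_eq0 -submx0 -(hsk (i:=a) (j:=j)).
    rewrite sub_capmx subB_sub //=.
    have -> : z - zs = (z + \sum_(i in R | i != a) c i) - (zs + \sum_(i in R | i != a) c i).
      by rewrite opprD addrACA subrr addr0.
    exact: subB_sub.
  by apply: contraTneq (ij) => ->; rewrite ltnn.
by rewrite nrmZ ?mulf_neq0 ?Rlam.
Qed.


Lemma card_lt_j : #|[set i : 'I_n.+1 | (i < j)%N]| = j.
Proof.
have hj : (j <= n.+1)%N := ltnW (ltn_ord j).
have -> : [set i : 'I_n.+1 | (i < j)%N] = widen_ord hj @: [set: 'I_j].
  apply/setP => i; rewrite inE; apply/idP/imsetP => [ij|[k _ ->]] //.
  by exists (Ordinal ij) => //; apply: val_inj.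
  by rewrite /= ltn_ord.
rewrite card_imset ?cardsT ?card_ord //.
by move=> x y /(congr1 val) /= /val_inj.
Qed.

Lemma card_Cd (a b : 'I_n.+1) : a != b -> (a < j)%N -> (b < j)%N ->
  #|Cd a b| = (#|pts (A b)| * (q ^ n) ^ (j - 2))%N.
Proof.
move=> ab aj bj; rewrite card_fam (bigD1 b) //= {1}/Cset eqxx; congr (_ * _)%N.
rewrite (eq_bigr (fun i : 'I_n.+1 => if (i < j)%N && (i != a) then (q ^ n)%N else 1%N)); last first.
  move=> i ib; rewrite /Cset (negbTE ib); case: ifP => _; first by rewrite card_svecs hA.
  by rewrite cards1.
rewrite -big_mkcondr prod_nat_const; congr (_ ^ _)%N.
have := card_lt_j; rewrite (cardsD1 a) (cardsD1 b) !inE aj /= eq_sym ab bj /= => e.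
set X := [set i : 'I_n.+1 | (i < j)%N] :\ a :\ b in e.
have -> : #|(fun i : 'I_n.+1 => [&& i != b, (i < j)%N & i != a])| = #|X|.
  apply: eq_card => i; rewrite !inE /=.
  by rewrite unfold_in /=; case: (i != b); case: (i != a); case: (i < j)%N.
move: e; move: #|X| (nat_of_ord j) => x y; lia.
Qed.

Lemma card_Dj : (#|Dj| <= #|[set p | good p]| * (2 * q ^ n.-1 * (q ^ n) ^ (j - 2)))%N.
Proof.
apply: leq_trans (subset_leq_card Dj_cover) _.
apply: leq_trans (card_bigcup_le _ _) _.
apply: (@leq_trans (\sum_(p | good p) (2 * q ^ n.-1 * (q ^ n) ^ (j - 2)))%N); last first.
  by rewrite -sum_nat_const; apply: eq_leq; apply: eq_bigl => p; rewrite inE.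
apply: leq_sum => -[[R a] b]; rewrite /good /= => /and5P[aR bR ab aj bj].
apply: leq_trans (leq_imset_card _ _) _.
rewrite card_Cd // leq_mul2r; apply/orP; right.
by have := card_pts2 (A b); rewrite hA.
Qed.

End Dec.

Section Fin.
Variables (F : finFieldType) (n : nat).
Local Notation q := #|F|.
Local Notation N := n.*2.+1.
Local Notation vT := {ffun 'I_n.+1 -> 'rV[F]_N}.
Variable A : 'I_n.+1 -> 'M[F]_N.
Hypothesis hA : forall i, \rank (A i) = n.
Hypothesis hsk : forall i j, i != j -> (A i :&: A j)%MS = 0.

Definition Z := [set U in proj_spaces F N n | [forall i, meets U (A i)]].
Definition vU (U : 'M[F]_N) : vT := [ffun i => nrm (nz_row (U :&: A i)%MS)].
Definition Fam := [set v : vT | [forall i, v i \in pts (A i)]].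

Lemma vU_prop U : U \in Z -> forall i, vU U i \in pts (A i) /\ (vU U i <= U)%MS.
Proof.
rewrite !inE => /andP[_ /forallP hm] i; rewrite ffunE.
have nz : (U :&: A i)%MS != 0 by rewrite -mxrank_eq0 -lt0n; exact: hm i.
split; first by rewrite pts_nrm ?nz_row_eq0 // (submx_trans (nz_row_sub _)) ?capmxSr.
by apply: nrm_sub; apply: submx_trans (nz_row_sub _) (capmxSl _ _).
Qed.

Lemma Z_cover : Z \subset ((fun v : vT => <<Sm v n.+1>>%MS) @: Fam) :|:
  \bigcup_(j : 'I_n.+1) \bigcup_(v in Dj A j) Ext <<Sm v j>>%MS.
Proof.
apply/subsetP => U UZ; have hv := vU_prop UZ.
move: (UZ); rewrite !inE => /andP[/andP[/eqP gU /eqP rU] _].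
have SU : forall k, (Sm (vU U) k <= U)%MS.
  by move=> k; apply: Sm_sub => i _; case: (hv i).
case: (dich (vU U)) => [rk|[j [rj vj]]].
  apply/orP; left; apply/imsetP; exists (vU U).
    by rewrite inE; apply/forallP => i; case: (hv i).
  rewrite -[LHS]gU; apply/genmxP.
  have e : (Sm (vU U) n.+1 == U)%MS by rewrite -(mxrank_leqif_eq (SU _)) rk rU.
  by case/andP: e => -> ->.
apply/orP; right; apply/bigcupP; exists j => //.
pose v : vT := [ffun i : 'I_n.+1 => if (i < j)%N then vU U i else 0].
have Sv : Sm v j = Sm (vU U) j.
  by apply/row_matrixP => i; rewrite !row_Sm ffunE; case: (i < j)%N.
apply/bigcupP; exists v.
  rewrite inE Sv rj eqxx andbT; apply/andP; split.
    by apply/forallP => i; rewrite ffunE; case: (i < j)%N => //; case: (hv i).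
  apply/rowV0Pn; exists (vU U j); first by rewrite sub_capmx vj; case/pts_sub: (hv j).1.
  by case/pts_sub: (hv j).1 => _ [].
rewrite /Ext inE Sv gU rU !eqxx /=.
by apply: submx_trans (SU j); rewrite genmxE.
Qed.

Lemma card_Z : (#|Z| <= (2 * q ^ n.-1) ^ n.+1 +
   \sum_(j : 'I_n.+1) #|Dj A j| * (2 * q ^ n) ^ (n.+1 - j))%N.
Proof.
apply: leq_trans (subset_leq_card Z_cover) _.
apply: leq_trans (leq_card_setU _ _).1 _; apply: leq_add.
  apply: leq_trans (leq_imset_card _ _) _.
  rewrite /Fam card_fam; rewrite -[n.+1 in X in (_ <= X)%N]card_ord -prod_nat_const.
  by apply: leq_prod => i _; have := card_pts2 (A i); rewrite hA.
apply: leq_trans (card_bigcup_le _ _) _; apply: leq_sum => j _.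
apply: leq_trans (card_bigcup_le _ _) _.
rewrite -sum_nat_const; apply: leq_sum => v; rewrite inE => /andP[/andP[_ /eqP rj] _].
apply: card_Ext; rewrite mxrank_gen rj; have := ltn_ord j; lia.
Qed.

End Fin.

Definition Tn (n : nat) := #|{: {set 'I_n.+1} * 'I_n.+1 * 'I_n.+1}|.
Definition Cn (n : nat) := (2 ^ n.+1 + n.+1 * (Tn n * 2 ^ n.+2))%N.

Lemma expo n : (1 <= n)%N -> (n.-1 * n.+1 = n ^ 2 - 1)%N /\ (n.-1 + n * n.-1 = n ^ 2 - 1)%N.
Proof. case: n => // k _ /=; rewrite expnS expn1; split; nia. Qed.

Section Fin2.
Variables (F : finFieldType) (n : nat).
Local Notation q := #|F|.
Local Notation N := n.*2.+1.
Variable A : 'I_n.+1 -> 'M[F]_N.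
Hypothesis hA : forall i, \rank (A i) = n.
Hypothesis hsk : forall i j, i != j -> (A i :&: A j)%MS = 0.
Hypothesis hn : (1 <= n)%N.

Lemma term_bound (j : 'I_n.+1) :
  (#|Dj A j| * (2 * q ^ n) ^ (n.+1 - j) <= Tn n * 2 ^ n.+2 * q ^ (n ^ 2 - 1))%N.
Proof.
apply: leq_trans (leq_mul (card_Dj hA hsk j) (leqnn _)) _.
case: (ltnP j 2) => j2.
  have -> : [set p | good j p] = set0.
    apply/setP => -[[R a] b]; rewrite !inE /good /=; apply/negP => /and5P[_ _ ab aj bj].
    have : (nat_of_ord a != nat_of_ord b) by [].
    move: aj bj j2; move: (nat_of_ord a) (nat_of_ord b) (nat_of_ord j) => x y z; lia.
  by rewrite cards0.
have hj : (j <= n)%N by have := ltn_ord j; lia.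
rewrite -[X in (_ <= X)%N]mulnA -[X in (X <= _)%N]mulnA.
apply: leq_mul; first by apply: max_card.
rewrite -[X in (X <= _)%N]mulnA -[X in (X <= _)%N]mulnA.
have e1 : ((q ^ n) ^ (j - 2) * (q ^ n) ^ (n.+1 - j) = (q ^ n) ^ n.-1)%N.
  by rewrite -expnD; congr (_ ^ _)%N; lia.
have e2 : (q ^ n.-1 * (q ^ n) ^ n.-1 = q ^ (n ^ 2 - 1))%N.
  by rewrite -expnM -expnD (expo hn).2.
rewrite expnMn (mulnCA ((q ^ n) ^ (j - 2))%N) e1 (mulnCA (q ^ n.-1)%N) e2.
rewrite mulnA; apply: leq_mul; last exact: leqnn.
by rewrite -expnS leq_pexp2l //; lia.
Qed.

Lemma final_bound : (#|Z A| <= Cn n * q ^ (n ^ 2 - 1))%N.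
Proof.
apply: leq_trans (card_Z hA) _.
rewrite /Cn mulnDl; apply: leq_add.
  by rewrite expnMn -expnM (expo hn).1.
apply: (@leq_trans (\sum_(j : 'I_n.+1) (Tn n * 2 ^ n.+2 * q ^ (n ^ 2 - 1)))%N).
  by apply: leq_sum => j _; apply: term_bound.
by rewrite sum_nat_const card_ord mulnA.
Qed.

End Fin2.

Theorem mainTheorem9 (n : nat) (hn : (2 <= n)%N) :
  exists C : nat,
    forall (F : finFieldType) (A : 'I_n.+1 -> 'M[F]_(n.*2.+1)),
      (forall i, \rank (A i) = n) ->
      (forall i j : 'I_n.+1, i != j -> skew_spaces (A i) (A j)) ->
      (#|[set U in proj_spaces F n.*2.+1 n | [forall i, meets U (A i)]]|
         <= C * #|F| ^ (n ^ 2 - 1))%N.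
Proof.
exists (Cn n) => F A hA hsk.
have hsk' : forall i j, i != j -> (A i :&: A j)%MS = 0.
  by move=> i j /hsk; rewrite /skew_spaces => /eqP; rewrite mxrank_eq0 => /eqP.
exact: (final_bound hA hsk' (ltnW hn)).
Qed.
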